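(* Let $T$ be a tree, $uv\in E(T)$, and $T_u$ the connected component of $T\setminus uv$ containing $u$. If $u$ is saturated in $T_u$, then $u$ is saturated in $T$.
   Context: A $2$-matching of a graph $G$ is a set of edges such that every vertex is incident to at most two of them; a maximum $2$-matching is one of largest possible size. A vertex $w$ is saturated in $G$ if every maximum $2$-matching of $G$ has exactly two edges incident to $w$. *)

(* Defs.v *)
(* Finite simple graphs as (vertex set, edge set) inside an
   ambient finType; an edge is a 2-element subset of the vertex set. *)
From mathcomp Require Import all_boot.
Set Implicit Arguments. Unset Strict Implicit. Unset Printing Implicit Defensive.

Record graph (T : finType) := Graph { verts : {set T}; edges : {set {set T}} }.

Section Graphs.
Variable T : finType.
Implicit Types (G : graph T) (x y : T) (M : {set {set T}}).

Definition wf_graph G : Prop :=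
  forall f, f \in edges G ->
    exists x y, [/\ x != y, x \in verts G, y \in verts G & f = [set x; y]].

Definition adj G : rel T := fun x y => (x != y) && ([set x; y] \in edges G).

Definition connected G : Prop :=
  forall x y, x \in verts G -> y \in verts G -> connect (adj G) x y.

Definition acyclic G : Prop :=
  forall c : seq T, ucycle (adj G) c -> size c < 3.

Definition is_tree G : Prop := [/\ wf_graph G, connected G & acyclic G].

Definition del_edge G (f : {set T}) : graph T := Graph (verts G) (edges G :\ f).

Definition induced G (S : {set T}) : graph T :=
  Graph S [set f in edges G | f \subset S].

Definition component G x : graph T :=
  induced G [set y in verts G | connect (adj G) x y].

Definition incident M x : {set {set T}} := [set f in M | x \in f].

Definition two_matching G M : Prop :=
  M \subset edges G /\ forall x, #|incident M x| <= 2.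

Definition max_two_matching G M : Prop :=
  two_matching G M /\ forall M', two_matching G M' -> #|M'| <= #|M|.

Definition saturated G w : Prop :=
  forall M, max_two_matching G M -> #|incident M w| = 2.

End Graphs.

(* Main.v *)
Require Import Defs.
From mathcomp Require Import all_boot zify.
Set Implicit Arguments. Unset Strict Implicit. Unset Printing Implicit Defensive.

Section L.
Variable T : finType.
Implicit Types (G H : graph T) (x y z : T) (A B C M N F : {set {set T}}).

Lemma edge_other G f x : wf_graph G -> f \in edges G -> x \in f ->
  exists y, [/\ x != y, x \in verts G, y \in verts G & f = [set x; y]].
Proof.
move=> wf fE xf; have [p [q [pq pV qV Ef]]] := wf f fE.
move: xf; rewrite Ef !inE => /orP [] /eqP ->.
  by exists q.
by exists p; split => //; [rewrite eq_sym | rewrite setUC].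
Qed.

Lemma inc_add A f z : f \notin A ->
  #|incident (f |: A) z| = #|incident A z| + (z \in f).
Proof.
move=> fA.
have -> : incident (f |: A) z = if z \in f then f |: incident A z else incident A z.
  apply/setP => h; rewrite /incident; case: ifP => zf; rewrite !inE;
  by case: eqP => [->|]; rewrite ?zf ?andbF.
case: ifP => zf; last by rewrite addn0.
by rewrite cardsU1 inE (negbTE fA) addn1.
Qed.

Lemma inc_del B g z : g \in B ->
  #|incident (B :\ g) z| + (z \in g) = #|incident B z|.
Proof.
move=> gB; rewrite [RHS](cardsD1 g) inE gB /= addnC.
congr (_ + _); apply: eq_card => h; rewrite !inE; by case: (h == g).
Qed.


Definition adjF F : rel T := fun x y => (x != y) && ([set x; y] \in F).

Lemma two_nbrs G F y : wf_graph G -> F \subset edges G -> 1 < #|incident F y| ->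
  exists a b, [/\ a != b, adjF F y a & adjF F y b].
Proof.
move=> wf FE /card_gt1P [f1 [f2 [f1I f2I f12]]].
move: f1I f2I; rewrite !inE => /andP [f1F yf1] /andP [f2F yf2].
have [a [ya _ _ E1]] := edge_other wf (subsetP FE _ f1F) yf1.
have [b [yb _ _ E2]] := edge_other wf (subsetP FE _ f2F) yf2.
exists a, b; split; rewrite /adjF ?ya ?yb -?E1 -?E2 //.
by apply: contra f12 => /eqP ab; rewrite E1 E2 ab.
Qed.

Lemma adjF_adj G F : F \subset edges G -> subrel (adjF F) (adj G).
Proof. by move=> FE x y /andP [xy /(subsetP FE) xyE]; rewrite /adj xy xyE. Qed.


Lemma close_cycle F x s a : path (adjF F) x s -> uniq (x :: s) -> a \in x :: s ->
  adjF F (last x s) a ->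
  exists c, ucycle (adjF F) c /\
     (size c < 3 -> exists w, x :: s = rcons (rcons w a) (last x s)).
Proof.
move=> p un; rewrite in_cons; case: (a =P x) => [-> _ | /eqP nax /= as_] e.
  exists (x :: s); split.
    by rewrite /ucycle un andbT /= rcons_path p e.
  case: s p un e => [|y [|z s]] //= _ _.
    by rewrite /adjF eqxx.
  by move=> _ _; exists [::].
case/splitPr: as_ p un e => s1 s2 p un e.
rewrite last_cat /= in e.
exists (a :: s2); split.
  apply/andP; split.
    rewrite /= rcons_path e andbT.
    by rewrite cat_path /= in p; case/and3P: p.
  by move: un => /= /andP [_]; rewrite cat_uniq => /and3P [_ _].
case: s2 {p un} e => [|y [|z s2]] //=.
  by rewrite /adjF eqxx.
by move=> _ _; exists (x :: s1); rewrite last_cat /= -!cats1 -catA.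
Qed.


Lemma leaf G F x0 : wf_graph G -> acyclic G -> F \subset edges G ->
  0 < #|incident F x0| -> exists x, #|incident F x| = 1.
Proof.
move=> wf ac FE h0.
case: (pickP (fun x => #|incident F x| == 1)) => [x /eqP|H1]; first by exists x.
have ok2 x : 0 < #|incident F x| -> 1 < #|incident F x|.
  by have := H1 x; rewrite /=; case: #|_| => [|[|n]].
have inc_a y a : adjF F y a -> 0 < #|incident F a|.
  move=> /andP [_ ya]; apply/card_gt0P; exists [set y; a].
  by rewrite !inE ya eqxx orbT.
have ext n : exists x s, [/\ path (adjF F) x s, uniq (x :: s),
    0 < #|incident F (last x s)| & n <= size s].
  elim: n => [|n [x [s [p un l sz]]]]; first by exists x0, [::].
  have [a [b [ab ya yb]]] := two_nbrs wf FE (ok2 _ l).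
  have ext1 c : adjF F (last x s) c -> c \notin x :: s ->
      exists x' s', [/\ path (adjF F) x' s', uniq (x' :: s'),
      0 < #|incident F (last x' s')| & n.+1 <= size s'].
    move=> yc cn; exists x, (rcons s c); split.
    - by rewrite rcons_path p yc.
    - by rewrite -rcons_cons rcons_uniq cn.
    - by rewrite last_rcons; apply: inc_a yc.
    - by rewrite size_rcons.
  case Ha: (a \in x :: s); last by apply: ext1 ya (negbT Ha).
  case Hb: (b \in x :: s); last by apply: ext1 yb (negbT Hb).
  exfalso.
  have [c1 [uc1 s1]] := close_cycle p un Ha ya.
  have [c2 [uc2 s2]] := close_cycle p un Hb yb.
  have big c : ucycle (adjF F) c -> 3 <= size c -> False.
    move=> /andP [cy uq] sz3.
    have : ucycle (adj G) c by rewrite /ucycle uq (sub_cycle (adjF_adj FE) cy).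
    by move/ac; rewrite ltnNge sz3.
  case: (ltnP (size c1) 3) => [/s1 [w1 E1]|]; last exact: big uc1.
  case: (ltnP (size c2) 3) => [/s2 [w2 E2]|]; last exact: big uc2.
  move: E1; rewrite E2 => /rcons_inj [] E.
  case: (rcons_inj E) => _ ba.
  by rewrite ba eqxx in ab.
have [x [s [_ un _ sz]]] := ext #|T|.
have := max_card (mem (x :: s)); rewrite (card_uniqP un) /=.
by rewrite ltnNge sz.
Qed.


Lemma inc_swap B f g z : f \notin B -> g \in B ->
  #|incident ((f |: B) :\ g) z| + (z \in g) = #|incident B z| + (z \in f).
Proof.
move=> fB gB; rewrite inc_del; [by rewrite inc_add | by rewrite !inE gB orbT].
Qed.

Lemma tm_add H B f x y : two_matching H B -> f \in edges H -> f \notin B ->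
  f = [set x; y] -> #|incident B x| <= 1 -> #|incident B y| <= 1 ->
  two_matching H (f |: B).
Proof.
move=> [BE Bd] fE fB Ef Bx By; split.
  by rewrite subUset sub1set fE BE.
move=> z; rewrite inc_add // Ef !inE.
case: (eqVneq z x) => [->|zx] /=; first by rewrite addn1.
case: (eqVneq z y) => [->|zy] /=; first by rewrite addn1.
by rewrite addn0.
Qed.

Lemma tm_swap H B f g x y : two_matching H B -> f \in edges H -> f \notin B ->
  g \in B -> f = [set x; y] -> y \in g -> #|incident B x| <= 1 ->
  two_matching H ((f |: B) :\ g).
Proof.
move=> [BE Bd] fE fB gB Ef yg Bx; split.
  apply: subset_trans (subsetDl _ _) _.
  by rewrite subUset sub1set fE BE.
move=> z; have := inc_swap z fB gB; have := Bd z; rewrite Ef !inE.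
case: (eqVneq z y) => [->|zy]; first by rewrite yg orbT; move: (#|incident _ y|) (#|incident B y|) => n m ? ?; lia.
case: (eqVneq z x) => [->|zx] /=.
  by move: (x \in g) (#|incident _ x|) (#|incident B x|) Bx => b n m ? ? ?; lia.
by move: (z \in g) (#|incident _ z|) (#|incident B z|) => b n m ? ?; lia.
Qed.

Lemma g_exists B C f y : #|incident C y| <= 2 -> f \in C -> f \notin B ->
  y \in f -> 1 < #|incident B y| -> exists g, [/\ g \in B, g \notin C & y \in g].
Proof.
move=> Cy fC fB yf By.
case: (pickP [pred g | (g \in B) && (g \notin C) && (y \in g)]) =>
  [g /andP [/andP [? ?] ?]|nog]; first by exists g.
have sub : incident B y \subset incident C y :\ f.
  apply/subsetP => h; rewrite !inE => /andP [hB yh].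
  have := nog h; rewrite /= hB yh andbT => /negbFE ->.
  apply/andP; split => //; apply/eqP => hf; move: fB; by rewrite -hf hB.
have := subset_leq_card sub.
have := cardsD1 f (incident C y); rewrite inE fC yf /= => E.
move=> h; have : 1 + #|incident B y| <= 2.
  by apply: leq_trans (leq_add (leqnn 1) h) _; rewrite -E.
by rewrite -(leq_add2l 1) in By; move=> /(leq_trans By).
Qed.

Definition sd C B := (C :\: B) :|: (B :\: C).

Lemma sd_sym C B : sd C B = sd B C.
Proof. by rewrite /sd setUC. Qed.

Lemma sd_swap C B f g : f \in C -> f \notin B -> g \in B -> g \notin C ->
  #|sd C ((f |: B) :\ g)| < #|sd C B|.
Proof.
move=> fC fB gB gC.
have fD : f \in sd C B by rewrite !inE fC fB.
have sub : sd C ((f |: B) :\ g) \subset sd C B :\ f.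
  apply/subsetP => h; rewrite !inE.
  have fg : f != g by apply/eqP => fg; move: fB; rewrite fg gB.
  case: (eqVneq h f) => [->|hf]; first by rewrite fC fg.
  case: (eqVneq h g) => [->|hg] /=; first by rewrite (negbTE gC).
  by [].
apply: leq_ltn_trans (subset_leq_card sub) _.
by rewrite [X in _ < X](cardsD1 f) fD.
Qed.

Lemma deg_le1 B C f x : (forall h, h \in sd C B -> x \in h -> h = f) ->
  f \in C -> f \notin B -> #|incident C x| <= 2 -> x \in f -> #|incident B x| <= 1.
Proof.
move=> only fC fB Cx xf.
have sub : incident B x \subset incident C x :\ f.
  apply/subsetP => h; rewrite !inE => /andP [hB xh]; rewrite xh andbT.
  have hf : h != f by apply/eqP => hf; move: fB; rewrite -hf hB.
  rewrite hf /=; apply: contraNT hf => hC.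
  by rewrite (only h) // !inE hB hC orbT.
apply: leq_trans (subset_leq_card sub) _.
have := cardsD1 f (incident C x); rewrite inE fC xf /= => E.
by rewrite -(leq_add2l 1) -E.
Qed.


Lemma ar1 n (b : bool) : n + b = 0 + false -> n = 0.
Proof. by move/eqP; rewrite addn_eq0 => /andP [/eqP]. Qed.
Lemma ar2 a n : true + a = true + n -> n = a.
Proof. by move/eqP; rewrite eqn_add2l => /eqP. Qed.

Lemma step G H u : wf_graph G -> acyclic G -> edges H \subset edges G ->
  saturated H u ->
  forall N A, max_two_matching H N -> two_matching H A -> #|incident A u| = 0 ->
  #|N| <= #|A|.+1 ->
  exists N' A', [/\ max_two_matching H N', two_matching H A',
     #|incident A' u| = 0, #|N'| <= #|A'|.+1 & #|sd N' A'| < #|sd N A|].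
Proof.
move=> wf ac HG sat N A NM AM Au NA.
have Nu := sat N NM.
have [NT Nmax] := NM; have [NH Nd] := NT; have [AH Ad] := AM.
have NE : N \subset edges G := subset_trans NH HG.
have AE : A \subset edges G := subset_trans AH HG.
have DE : sd N A \subset edges G.
  by rewrite /sd subUset (subset_trans (subsetDl _ _) NE) (subset_trans (subsetDl _ _) AE).
have A0 : incident A u = set0 by apply: cards0_eq.
have NuD : incident N u \subset incident (sd N A) u.
  apply/subsetP => h; rewrite inE => /andP [hN uh].
  have hA : h \notin A.
    apply/negP => hA; have : h \in incident A u by rewrite inE hA uh.
    by rewrite A0 inE.
  by rewrite !inE hA hN uh.
have Du : 1 < #|incident (sd N A) u|.
  by apply: leq_trans (subset_leq_card NuD); rewrite Nu.
have [x Dx] := leaf wf ac DE (ltnW Du).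
have xu : x != u by apply/eqP => xu; move: Du; rewrite -xu Dx.
have /cards1P [f If] : #|incident (sd N A) x| == 1 by rewrite Dx.
have : f \in incident (sd N A) x by rewrite If set11.
rewrite inE => /andP [fD xf].
have only h : h \in sd N A -> x \in h -> h = f.
  by move=> hD xh; apply/set1P; rewrite -If inE hD xh.
move: fD; rewrite !inE => /orP [/andP [fA fN] | /andP [fN fA]].
- have [y [xy _ _ Ef]] := edge_other wf (subsetP NE _ fN) xf.
  have Ax : #|incident A x| <= 1 := deg_le1 only fN fA (Nd x) xf.
  have fH : f \in edges H := subsetP NH _ fN.
  case: (leqP #|incident A y| 1) => Ay.
    exfalso.
    have A'M : two_matching H (f |: A) := tm_add AM fH fA Ef Ax Ay.
    have : max_two_matching H (f |: A).
      split => // M' M'M; apply: leq_trans (Nmax _ M'M) _.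
      by rewrite cardsU1 fA add1n.
    by move/sat; rewrite inc_add // Au; case: (u \in f).
  have yf : y \in f by rewrite Ef !inE eqxx orbT.
  have [g [gA gN yg]] := g_exists (Nd y) fN fA yf Ay.
  have yu : y != u by apply/eqP => yu; move: Ay; rewrite yu Au.
  exists N, ((f |: A) :\ g); split => //.
  + exact: tm_swap AM fH fA gA Ef yg Ax.
  + have := inc_swap u fA gA; rewrite Au Ef !inE.
    rewrite (eq_sym u x) (negbTE xu) (eq_sym u y) (negbTE yu) /=.
    exact: ar1.
  + have := cardsD1 g (f |: A); rewrite inE gA orbT cardsU1 fA /=.
    by move/ar2 ->.
  + exact: sd_swap fN fA gA gN.
- have only' h : h \in sd A N -> x \in h -> h = f.
    by rewrite -sd_sym; exact: only.
  have [z [xz _ _ Ef]] := edge_other wf (subsetP AE _ fA) xf.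
  have Nx : #|incident N x| <= 1 := deg_le1 only' fA fN (Ad x) xf.
  have fH : f \in edges H := subsetP AH _ fA.
  case: (leqP #|incident N z| 1) => Nz.
    exfalso.
    have := Nmax _ (tm_add NT fH fN Ef Nx Nz).
    by rewrite cardsU1 fN add1n ltnn.
  have zf : z \in f by rewrite Ef !inE eqxx orbT.
  have [g [gN gA zg]] := g_exists (Ad z) fA fN zf Nz.
  have cE : #|(f |: N) :\ g| = #|N|.
    have := cardsD1 g (f |: N); rewrite inE gN orbT cardsU1 fN /=.
    by move/ar2.
  exists ((f |: N) :\ g), A; split => //.
  + split; first exact: tm_swap NT fH fN gN Ef zg Nx.
    by move=> M' M'M; rewrite cE; apply: Nmax.
  + by rewrite cE.
  + rewrite (sd_sym ((f |: N) :\ g)) (sd_sym N).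
    exact: sd_swap fA fN gN gA.
Qed.

Lemma claimC G H u : wf_graph G -> acyclic G -> edges H \subset edges G ->
  saturated H u ->
  forall N A, max_two_matching H N -> two_matching H A -> #|incident A u| = 0 ->
  #|N| <= #|A|.+1 -> False.
Proof.
move=> wf ac HG sat N A.
move: {2}#|sd N A|.+1 (ltnSn #|sd N A|) => k.
elim: k N A => [//|k IH] N A lt NM AM Au NA.
have [N' [A' [NM' AM' Au' NA' lt']]] := step wf ac HG sat NM AM Au NA.
exact: IH N' A' (leq_trans lt' (ltnSE lt)) NM' AM' Au' NA'.
Qed.


Lemma exists_max H : exists N, max_two_matching H N.
Proof.
pose P := fun M : {set {set T}} =>
  (M \subset edges H) && [forall x, #|incident M x| <= 2].
have P0 : P set0.
  rewrite /P sub0set; apply/forallP => x.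
  have -> : incident set0 x = set0 by apply/setP => h; rewrite !inE.
  by rewrite cards0.
case: (arg_maxnP (fun M => #|M|) P0) => N /andP [NE /forallP Nd] Nmax.
exists N; split; first by split.
move=> M' [M'E M'd]; apply: Nmax; rewrite /P M'E; exact/forallP.
Qed.

End L.

Theorem proposition2p6 (T : finType) (G : graph T) (u v : T) :
  is_tree G -> u != v -> [set u; v] \in edges G ->
  saturated (component (del_edge G [set u; v]) u) u ->
  saturated G u.
Proof.
move=> [wf con ac] uv uvE satH M [[ME Md] Mmax].
pose S := [set y in verts G | connect (adj (del_edge G [set u; v])) u y].
move: satH; set H := component _ u => satH.
have EH : edges H = [set f in edges G :\ [set u; v] | f \subset S] by [].
clearbody H.
have HG : edges H \subset edges G.
  by apply/subsetP => f; rewrite EH !inE => /andP [/andP [_ ->] _].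
have uvH : [set u; v] \notin edges H by rewrite EH !inE eqxx.
have K f x : f \in edges G -> f \notin edges H -> x \in f -> x \in S ->
    f = [set u; v].
  move=> fE fH xf xS; apply/eqP; apply: contraNT fH => fuv.
  have [y [xy _ yV Ef]] := edge_other wf fE xf.
  have yS : y \in S.
    move: xS; rewrite !inE => /andP [_ cxu]; rewrite yV /=.
    apply: connect_trans cxu (connect1 _).
    by rewrite /adj xy /= !inE -Ef fuv fE.
  by rewrite EH !inE fuv fE /= Ef subUset !sub1set xS yS.
have [N NM] := exists_max H.
have [[NH Nd] Nmax] := NM.
pose MH := M :&: edges H.
pose Mo := (M :\: edges H) :\ [set u; v].
have MHt : two_matching H MH.
  split; first exact: subsetIr.
  move=> x; apply: leq_trans (Md x); apply: subset_leq_card.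
  apply/subsetP => h; rewrite !inE => /andP [/andP [hM _] xh].
  by rewrite hM xh.
have M't : two_matching G (N :|: Mo).
  split.
    rewrite subUset (subset_trans NH HG) /=.
    by apply: subset_trans (subsetDl _ _) _; apply: subset_trans (subsetDl _ _) ME.
  move=> x; case xS : (x \in S).
  - have : incident (N :|: Mo) x \subset incident N x.
      apply/subsetP => h; rewrite !inE.
      move=> /andP [/orP [hN|/andP [huv /andP [hH hM]]] xh]; first by rewrite hN xh.
      by move: huv; rewrite (K h x (subsetP ME _ hM) hH xh xS) eqxx.
    by move/subset_leq_card => le; exact: leq_trans le (Nd x).
  - have : incident (N :|: Mo) x \subset incident M x.
      apply/subsetP => h; rewrite !inE.
      move=> /andP [/orP [hN|/andP [_ /andP [_ hM]]] xh]; last by rewrite hM xh.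
      move: (subsetP NH _ hN); rewrite EH inE => /andP [_ /subsetP hS].
      by move: (hS x xh); rewrite xS.
    by move/subset_leq_card => le; exact: leq_trans le (Md x).
have cardM' : #|N :|: Mo| = #|N| + #|Mo|.
  have := cardsUI N Mo.
  have -> : N :&: Mo = set0.
    apply/setP => h; rewrite !inE; case hN: (h \in N) => //=.
    by rewrite (subsetP NH _ hN) /= andbF.
  by rewrite cards0 addn0.
have cardM : #|M| = #|MH| + #|Mo| + ([set u; v] \in M).
  rewrite -(cardsID (edges H) M) (cardsD1 [set u; v] (M :\: edges H)).
  by rewrite !inE uvH /= addnCA addnC.
have le := Mmax _ M't.
rewrite cardM' cardM in le.
have le' : #|N| <= #|MH| + ([set u; v] \in M).
  by move: le; rewrite addnAC leq_add2r.
apply/eqP; rewrite eqn_leq Md /=.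
case uvM : ([set u; v] \in M); rewrite uvM in le'.
- case: (posnP #|incident MH u|) => [MH0|MHpos].
    have le'' : #|N| <= #|MH|.+1 by move: le'; rewrite /= addn1.
    by case: (claimC wf ac HG satH NM MHt MH0 le'').
  have : [set u; v] |: incident MH u \subset incident M u.
    apply/subsetP => h; rewrite !inE => /orP [/eqP ->|/andP [/andP [hM _] uh]].
      by rewrite uvM !inE eqxx.
    by rewrite hM uh.
  have nin : [set u; v] \notin incident MH u by rewrite !inE (negbTE uvH) andbF.
  move/subset_leq_card; rewrite cardsU1 nin => h; apply: leq_trans _ h.
  by rewrite add1n ltnS.
- have MHM : max_two_matching H MH.
    split => // M' M'M; apply: leq_trans (Nmax _ M'M) _.
    by rewrite addn0 in le'.
  have e := satH _ MHM.
  rewrite -e; apply: subset_leq_card; apply/subsetP => h.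
  by rewrite !inE => /andP [/andP [hM _] uh]; rewrite hM uh.
Qed.
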